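(* Let $\Lambda$ be a strongly connected finite $k$-graph. Then $\Lambda$ is aperiodic if and only if $\operatorname{Per}\Lambda=\{0\}$.
   Context: A $k$-graph is a countable category $\Lambda$ with a functor $d:\Lambda\to\mathbb{N}^k$ such that whenever $d(\lambda)=m+n$ there are unique $\mu,\nu$ with $d(\mu)=m$, $d(\nu)=n$, $\lambda=\mu\nu$. $\Lambda^n=d^{-1}(n)$, $\Lambda^0$ = vertices, $r,s$ range and source. Standing convention: $\Lambda^{e_i}\neq\emptyset$ for each $i$. Finite: each $\Lambda^n$ finite; strongly connected: $v\Lambda w\neq\emptyset$ for all vertices. Infinite paths: degree-preserving functors $x:\Omega_k\to\Lambda$, where $\Omega_k=\{(m,n)\in\mathbb{N}^k\times\mathbb{N}^k:m\le n\}$ with $r(m,n)=(m,m)$, $s(m,n)=(n,n)$, $(m,n)(n,p)=(m,p)$, $d(m,n)=n-m$; $\Lambda^\infty$ their set; $\sigma^n(x)(p,q)=x(n+p,n+q)$; $Z(v)=\{x\in\Lambda^\infty:x(0,0)=v\}$. $\Lambda$ is aperiodic if for each $v\in\Lambda^0$ there is $x\in Z(v)$ with $\sigma^m(x)\neq\sigma^n(x)$ for all $m\neq n$ in $\mathbb{N}^k$. $\operatorname{Per}\Lambda=\{m-n:m,n\in\mathbb{N}^k,\ \sigma^m(x)=\sigma^n(x)\ \forall x\in\Lambda^\infty\}$. *)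

(* Defs.v *)
From mathcomp Require Import all_boot all_algebra.
From Stdlib Require List.
Set Implicit Arguments. Unset Strict Implicit. Unset Printing Implicit Defensive.

(** N^k and Z^k as finite functions on 'I_k (Leibniz = extensional equality). *)
Definition NN (k : nat) := {ffun 'I_k -> nat}.
Definition ZZ (k : nat) := {ffun 'I_k -> int}.

Definition nn0 {k} : NN k := [ffun _ => 0%N].
Definition nnadd {k} (m n : NN k) : NN k := [ffun i => (m i + n i)%N].
Definition nnsub {k} (m n : NN k) : NN k := [ffun i => (m i - n i)%N].
Definition nnle {k} (m n : NN k) : Prop := forall i, (m i <= n i)%N.
Definition nne {k} (i : 'I_k) : NN k := [ffun j => (j == i : nat)].
Definition zzdiff {k} (m n : NN k) : ZZ k := [ffun i => (Posz (m i) - Posz (n i))%R].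
Definition zz0 {k} : ZZ k := [ffun _ => 0%R].

(** Composition is a total function, only meaningful on composable pairs
    (s mu = r nu); "kcomp mu nu" is the composite mu nu (first nu, then mu). *)
Record kgraph_data (k : nat) := KGraphData {
  kV : Type;
  kM : Type;
  kr : kM -> kV;
  ks : kM -> kV;
  kid : kV -> kM;
  kcomp : kM -> kM -> kM;
  kd : kM -> NN k
}.

Section KGraph.
Variables (k : nat) (L : kgraph_data k).
Local Notation V := (kV L).
Local Notation M := (kM L).
Local Notation r := (@kr k L).
Local Notation s := (@ks k L).
Local Notation idm := (@kid k L).
Local Notation comp := (@kcomp k L).
Local Notation d := (@kd k L).

Definition is_countable_category : Prop :=
  [/\ exists f : M -> nat, injective f,
      forall v, r (idm v) = v /\ s (idm v) = v,
      forall mu nu, s mu = r nu -> r (comp mu nu) = r mu /\ s (comp mu nu) = s nu,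
      forall mu, comp (idm (r mu)) mu = mu /\ comp mu (idm (s mu)) = mu &
      forall la mu nu, s la = r mu -> s mu = r nu ->
        comp (comp la mu) nu = comp la (comp mu nu)].

Definition is_degree_functor : Prop :=
  (forall v, d (idm v) = nn0) /\
  (forall mu nu, s mu = r nu -> d (comp mu nu) = nnadd (d mu) (d nu)).

Definition unique_factorisation : Prop :=
  forall la (m n : NN k), d la = nnadd m n ->
    exists mu nu, [/\ d mu = m, d nu = n, s mu = r nu & la = comp mu nu] /\
      forall mu' nu', d mu' = m -> d nu' = n -> s mu' = r nu' ->
        la = comp mu' nu' -> mu' = mu /\ nu' = nu.

(** standing convention: Lambda^{e_i} is nonempty for each i *)
Definition edges_nonempty : Prop := forall i : 'I_k, exists la, d la = nne i.

Definition is_kgraph : Prop :=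
  [/\ is_countable_category, is_degree_functor, unique_factorisation
    & edges_nonempty].

Definition kgraph_finite : Prop :=
  forall n : NN k, exists l : list M, forall la, d la = n -> List.In la l.

Definition strongly_connected : Prop :=
  forall v w : V, exists la, r la = v /\ s la = w.

(** Infinite paths: degree-preserving functors Omega_k -> Lambda, given by
    their values x m n = x(m,n) on the morphisms (m,n), m <= n, of Omega_k
    (values at pairs with m not <= n are irrelevant junk). *)
Definition is_inf_path (x : NN k -> NN k -> M) : Prop :=
  [/\ forall m, x m m = idm (r (x m m)),
      forall m n p, nnle m n -> nnle n p ->
        s (x m n) = r (x n p) /\ x m p = comp (x m n) (x n p) &
      forall m n, nnle m n -> d (x m n) = nnsub n m].

Definition in_Z (v : V) (x : NN k -> NN k -> M) : Prop := r (x nn0 nn0) = v.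

Definition shift (n : NN k) (x : NN k -> NN k -> M) : NN k -> NN k -> M :=
  fun p q => x (nnadd n p) (nnadd n q).

Definition path_eq (x y : NN k -> NN k -> M) : Prop :=
  forall p q, nnle p q -> x p q = y p q.

Definition aperiodic : Prop :=
  forall v : V, exists x, is_inf_path x /\ in_Z v x /\
    forall m n : NN k, m <> n -> ~ path_eq (shift m x) (shift n x).

Definition in_Per (z : ZZ k) : Prop :=
  exists m n : NN k, z = zzdiff m n /\
    forall x, is_inf_path x -> path_eq (shift m x) (shift n x).

End KGraph.

(* Main.v *)
Require Import Defs.
From mathcomp Require Import all_boot all_algebra.
From mathcomp Require Import zify.
From Stdlib Require Import ClassicalEpsilon Classical.
Set Implicit Arguments. Unset Strict Implicit. Unset Printing Implicit Defensive.

Ltac nnext := apply/ffunP => i; rewrite !ffunE; lia.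

Section NNfacts.
Variable k : nat.
Lemma nnaddC (m n : NN k) : nnadd m n = nnadd n m. Proof. by apply/ffunP => i; rewrite !ffunE addnC. Qed.
Lemma nnaddA (m n p : NN k) : nnadd m (nnadd n p) = nnadd (nnadd m n) p.
Proof. apply/ffunP => i; by rewrite !ffunE ?addKn ?addnA. Qed.
Lemma nnadd0 (n : NN k) : nnadd nn0 n = n. Proof. by apply/ffunP => i; rewrite !ffunE. Qed.
Lemma nnsub0 (n : NN k) : nnsub n nn0 = n. Proof. by apply/ffunP => i; rewrite !ffunE subn0. Qed.
Lemma nnsubnn (n : NN k) : nnsub n n = nn0. Proof. by apply/ffunP => i; rewrite !ffunE subnn. Qed.
Lemma nnadd_sub (m n : NN k) : nnsub (nnadd m n) m = n.
Proof. apply/ffunP => i; by rewrite !ffunE ?addKn ?addnA. Qed.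
Lemma nnsub_add (m n : NN k) : nnle m n -> nnadd m (nnsub n m) = n.
Proof. move=> H; apply/ffunP => i; move: (H i); rewrite !ffunE; move: (m i) (n i) => a b; lia. Qed.
Lemma nnle_refl (m : NN k) : nnle m m. Proof. by move=> i. Qed.
Lemma nnle_trans (m n p : NN k) : nnle m n -> nnle n p -> nnle m p.
Proof. move=> H1 H2 i; exact: leq_trans (H1 i) (H2 i). Qed.
Lemma nnle0 (m : NN k) : nnle nn0 m. Proof. by move=> i; rewrite ffunE. Qed.
Lemma nnle_addr (m n : NN k) : nnle m (nnadd m n). Proof. move=> i; rewrite ffunE; exact: leq_addr. Qed.
Lemma nnle_add2l (p m n : NN k) : nnle m n -> nnle (nnadd p m) (nnadd p n).
Proof. move=> H i; move: (H i); by rewrite !ffunE leq_add2l. Qed.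
End NNfacts.
Section Cat.
Variables (k : nat) (L : kgraph_data k).
Local Notation V := (kV L).
Local Notation M := (kM L).
Local Notation r := (@kr k L).
Local Notation s := (@ks k L).
Local Notation idm := (@kid k L).
Local Notation comp := (@kcomp k L).
Local Notation d := (@kd k L).
Hypothesis Hcat : is_countable_category L.
Hypothesis Hdf : is_degree_functor L.
Hypothesis HUF : unique_factorisation L.

Lemma r_id v : r (idm v) = v. Proof. by case: Hcat => _ H _ _ _; case: (H v). Qed.
Lemma s_id v : s (idm v) = v. Proof. by case: Hcat => _ H _ _ _; case: (H v). Qed.
Lemma r_comp a b : s a = r b -> r (comp a b) = r a. Proof. by case: Hcat => _ _ H _ _ /H []. Qed.
Lemma s_comp a b : s a = r b -> s (comp a b) = s b. Proof. by case: Hcat => _ _ H _ _ /H []. Qed.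
Lemma comp_idl a : comp (idm (r a)) a = a. Proof. by case: Hcat => _ _ _ H _; case: (H a). Qed.
Lemma comp_idr a : comp a (idm (s a)) = a. Proof. by case: Hcat => _ _ _ H _; case: (H a). Qed.
Lemma compA a b c : s a = r b -> s b = r c -> comp (comp a b) c = comp a (comp b c).
Proof. by case: Hcat => _ _ _ _ H; apply: H. Qed.
Lemma d_id v : d (idm v) = nn0. Proof. by case: Hdf. Qed.
Lemma d_comp a b : s a = r b -> d (comp a b) = nnadd (d a) (d b). Proof. by case: Hdf => _ H; apply: H. Qed.

Lemma deg0_id la : d la = nn0 -> la = idm (r la).
Proof.
move=> H0.
have H1 : d la = nnadd nn0 nn0 by rewrite nnadd0.
have [mu [nu [_ U]]] := HUF H1.
have [E1 _] := U (idm (r la)) la (d_id _) H0 (s_id _) (esym (comp_idl la)).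
have [E2 _] := U la (idm (s la)) H0 (d_id _) (esym (r_id _)) (esym (comp_idr la)).
by rewrite E1.
Qed.

Definition fprop (a : M) (m : NN k) (p : M * M) :=
  [/\ d p.1 = m, s p.1 = r p.2 & a = comp p.1 p.2].
Definition fac (a : M) (m : NN k) : M * M :=
  epsilon (inhabits (a, a)) (fprop a m).
Definition pre a m := (fac a m).1.
Definition suf a m := (fac a m).2.

Lemma fac_spec a m : nnle m (d a) -> fprop a m (fac a m).
Proof.
move=> Hm; apply: epsilon_spec.
have H1 : d a = nnadd m (nnsub (d a) m) by rewrite nnsub_add.
have [mu [nu [[E1 _ E3 E4] _]]] := HUF H1.
by exists (mu, nu).
Qed.

Lemma fac_uniq a m p q : fprop a m p -> fprop a m q -> p = q.
Proof.
case: p => p1 p2; case: q => q1 q2 [/= Ep1 Ep2 Ep3] [/= Eq1 Eq2 Eq3].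
have Hd : d a = nnadd m (d p2) by rewrite Ep3 d_comp // Ep1.
have Hdq : d q2 = d p2.
  have : d a = nnadd m (d q2) by rewrite Eq3 d_comp // Eq1.
  by rewrite Hd => /(congr1 (fun z => nnsub z m)); rewrite !nnadd_sub.
have [mu [nu [_ U]]] := HUF Hd.
have [-> ->] := U p1 p2 Ep1 erefl Ep2 Ep3.
by have [-> ->] := U q1 q2 Eq1 Hdq Eq2 Eq3.
Qed.

Lemma pre_suf a m : nnle m (d a) ->
  [/\ d (pre a m) = m, s (pre a m) = r (suf a m), a = comp (pre a m) (suf a m)
    & d (suf a m) = nnsub (d a) m].
Proof.
move=> /fac_spec [E1 E2 E3]; rewrite /pre /suf; split => //.
by rewrite [in RHS]E3 d_comp // E1 nnadd_sub.
Qed.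

Lemma fac_comp b c : s b = r c -> pre (comp b c) (d b) = b /\ suf (comp b c) (d b) = c.
Proof.
move=> Hbc.
have Hle : nnle (d b) (d (comp b c)) by rewrite d_comp //; exact: nnle_addr.
have Hp : fprop (comp b c) (d b) (b, c) by [].
by rewrite /pre /suf (fac_uniq (fac_spec Hle) Hp).
Qed.

Lemma fac_comp' b c m : s b = r c -> d b = m -> pre (comp b c) m = b /\ suf (comp b c) m = c.
Proof. by move=> H <-; apply: fac_comp. Qed.

Lemma r_pre a m : nnle m (d a) -> r (pre a m) = r a.
Proof. by move=> /pre_suf [_ E2 E3 _]; rewrite {2}E3 r_comp. Qed.
Lemma s_suf a m : nnle m (d a) -> s (suf a m) = s a.
Proof. by move=> /pre_suf [_ E2 E3 _]; rewrite {2}E3 s_comp. Qed.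
Lemma r_suf0 a : r (suf a nn0) = r a.
Proof.
have [E1 E2 E3 _] := pre_suf (nnle0 (d a)).
by rewrite -E2 (deg0_id E1) s_id r_pre //; exact: nnle0.
Qed.

Definition seg a P Q := suf (pre a Q) P.

Lemma pre_pre a Q R : nnle Q R -> nnle R (d a) -> pre (pre a R) Q = pre a Q.
Proof.
move=> HQ HR.
have [dA sA eA _] := pre_suf HR.
have HQA : nnle Q (d (pre a R)) by rewrite dA.
have [dB sB eB _] := pre_suf HQA.
set A := pre a R in dA sA eA eB HQA *.
set B := pre A Q in dB sB eB *; set C := suf A Q in sB eB *.
have sC : s C = r (suf a R) by rewrite /C s_suf.
have E : a = comp B (comp C (suf a R)) by rewrite -compA // -eB.
by rewrite E -{1}dB (proj1 (fac_comp (b := B) _)) // r_comp.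
Qed.

Lemma seg_deg a P Q : nnle P Q -> nnle Q (d a) -> d (seg a P Q) = nnsub Q P.
Proof.
move=> HP HQ; have [dA _ _ _] := pre_suf HQ.
have HP' : nnle P (d (pre a Q)) by rewrite dA.
by have [_ _ _ ->] := pre_suf HP'; rewrite dA.
Qed.

Lemma seg_id a P : nnle P (d a) -> seg a P P = idm (r (seg a P P)).
Proof. by move=> HP; apply: deg0_id; rewrite seg_deg ?nnsubnn //; exact: nnle_refl. Qed.

Lemma seg_comp a P Q R : nnle P Q -> nnle Q R -> nnle R (d a) ->
  s (seg a P Q) = r (seg a Q R) /\ seg a P R = comp (seg a P Q) (seg a Q R).
Proof.
move=> HPQ HQR HR.
rewrite /seg -(pre_pre HQR HR).
have [dA sA eA _] := pre_suf HR.
set A := pre a R in dA sA eA *.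
have HQA : nnle Q (d A) by rewrite dA.
have [dB sB eB _] := pre_suf HQA.
set B := pre A Q in dB sB eB *; set C := suf A Q in sB eB *.
have HPB : nnle P (d B) by rewrite dB.
have [dD sD eD _] := pre_suf HPB.
set D := pre B P in dD sD eD *; set E := suf B P in sD eD *.
have sE : s E = r C by rewrite /E s_suf.
split=> //.
have EA : A = comp D (comp E C) by rewrite -compA // -eD.
by rewrite {1}EA -{1}dD; case: (fac_comp (b := D) (c := comp E C)) => //; rewrite r_comp.
Qed.

Lemma pre_ext a nu Q : s a = r nu -> nnle Q (d a) -> pre (comp a nu) Q = pre a Q.
Proof.
move=> Han HQ.
have [dB sB eB _] := pre_suf HQ.
have sC : s (suf a Q) = r nu by rewrite s_suf.
have E : comp a nu = comp (pre a Q) (comp (suf a Q) nu) by rewrite -compA // -eB.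
have sP : s (pre a Q) = r (comp (suf a Q) nu) by rewrite r_comp.
by rewrite E; have := proj1 (fac_comp sP); rewrite dB.
Qed.

Lemma seg_ext a nu P Q : s a = r nu -> nnle Q (d a) -> seg (comp a nu) P Q = seg a P Q.
Proof. by move=> H1 H2; rewrite /seg pre_ext. Qed.

Lemma seg_r0 a : r (seg a nn0 nn0) = r a.
Proof. by rewrite /seg r_suf0 r_pre //; exact: nnle0. Qed.

Lemma seg_cat l w c e : s l = r w -> nnle c e -> nnle e (d w) ->
  seg (comp l w) (nnadd (d l) c) (nnadd (d l) e) = seg w c e.
Proof.
move=> Hlw Hce He.
have [dB sB eB _] := pre_suf He.
have Hl : s l = r (pre w e) by rewrite r_pre.
have E1 : comp l w = comp (comp l (pre w e)) (suf w e) by rewrite compA // -eB.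
have Hd1 : d (comp l (pre w e)) = nnadd (d l) e by rewrite d_comp // dB.
rewrite /seg E1 (proj1 (fac_comp' _ Hd1)); last by rewrite s_comp.
have Hc : nnle c (d (pre w e)) by rewrite dB.
have [dD sD eD _] := pre_suf Hc.
have Hl2 : s l = r (pre (pre w e) c) by rewrite r_pre // r_pre.
have E2 : comp l (pre w e) = comp (comp l (pre (pre w e) c)) (suf (pre w e) c)
  by rewrite compA // -eD.
have Hd2 : d (comp l (pre (pre w e) c)) = nnadd (d l) c by rewrite d_comp // dD.
by rewrite {1}E2 (proj2 (fac_comp' _ Hd2)) // s_comp.
Qed.

Lemma seg_path y P Q R : @is_inf_path k L y -> nnle P R -> nnle R Q ->
  seg (y nn0 Q) P R = y P R.
Proof.
move=> [_ Hc Hd] HPR HRQ.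
have H0R : nnle nn0 R by exact: nnle0.
have [E1 E2] := Hc _ _ _ H0R HRQ.
have dR : d (y nn0 R) = R by rewrite Hd // nnsub0.
rewrite /seg E2 (proj1 (fac_comp' E1 dR)).
have [F1 F2] := Hc _ _ _ (nnle0 P) HPR.
have dP : d (y nn0 P) = P by rewrite Hd ?nnsub0 //; exact: nnle0.
by rewrite F2 (proj2 (fac_comp' F1 dP)).
Qed.

Definition ext a b := exists nu, s a = r nu /\ b = comp a nu.

Lemma ext_refl a : ext a a.
Proof. by exists (idm (s a)); rewrite r_id comp_idr. Qed.

Lemma ext_trans a b c : ext a b -> ext b c -> ext a c.
Proof.
move=> [nu [H1 ->]] [mu [H2 ->]]; exists (comp nu mu).
rewrite s_comp // in H2; split; first by rewrite r_comp.
by rewrite compA.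
Qed.

Lemma seg_ext2 a b P Q : ext a b -> nnle Q (d a) -> seg b P Q = seg a P Q.
Proof. by move=> [nu [H ->]] HQ; apply: seg_ext. Qed.

Lemma ext_deg a b : ext a b -> nnle (d a) (d b).
Proof. by move=> [nu [H ->]]; rewrite d_comp //; exact: nnle_addr. Qed.

Definition bigJ (Q : NN k) := (\max_(i < k) Q i)%N.
Definition limx (f : nat -> M) (P Q : NN k) := seg (f (bigJ Q)) P Q.

Section Lim.
Variable f : nat -> M.
Hypothesis Hext : forall j, ext (f j) (f j.+1).
Hypothesis Hfd : forall j (i : 'I_k), (j <= d (f j) i)%N.

Lemma f_ext j t : ext (f j) (f (j + t)).
Proof.
elim: t => [|t IH]; first by rewrite addn0; exact: ext_refl.
by rewrite addnS; apply: ext_trans IH (Hext _).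
Qed.

Lemma f_ext' j j' : (j <= j')%N -> ext (f j) (f j').
Proof. by move=> H; rewrite -(subnKC H); exact: f_ext. Qed.

Lemma f_cov Q : nnle Q (d (f (bigJ Q))).
Proof. move=> i; apply: leq_trans (Hfd _ i); exact: (leq_bigmax i). Qed.

Lemma lim_seg j P Q : nnle Q (d (f j)) -> limx f P Q = seg (f j) P Q.
Proof.
move=> HQ; rewrite /limx; case: (leqP (bigJ Q) j) => H.
  by rewrite (seg_ext2 _ (f_ext' H)) //; exact: f_cov.
by rewrite (seg_ext2 _ (f_ext' (ltnW H))).
Qed.

Lemma lim_inf : @is_inf_path k L (limx f).
Proof.
split.
- move=> m; rewrite (lim_seg (j := bigJ m)); [exact: (seg_id (f_cov m)) | exact: f_cov].
- move=> m n p Hmn Hnp.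
  have Hp := f_cov p.
  rewrite !(lim_seg (j := bigJ p)) //; first exact: seg_comp.
  exact: nnle_trans Hnp Hp.
- move=> m n Hmn; rewrite (lim_seg (j := bigJ n)); [exact: (seg_deg Hmn (f_cov n)) | exact: f_cov].
Qed.

Lemma lim_r0 : r (limx f nn0 nn0) = r (f 0).
Proof. by rewrite (lim_seg (j := 0)) ?seg_r0 //; exact: nnle0. Qed.
End Lim.

Definition cst (j : nat) : NN k := [ffun _ => j].
Definition catx (l : M) (y : NN k -> NN k -> M) :=
  limx (fun j => comp l (y nn0 (cst j))).

Lemma inf_r y m n : @is_inf_path k L y -> nnle m n -> r (y m n) = r (y m m).
Proof.
move=> [_ Hc _] H; have [E1 E2] := Hc m m n (nnle_refl m) H.
by rewrite E2 r_comp.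
Qed.

Lemma inf_d y m n : @is_inf_path k L y -> nnle m n -> d (y m n) = nnsub n m.
Proof. by move=> [_ _ Hd]; apply: Hd. Qed.

Lemma cat_props l y : @is_inf_path k L y -> s l = r (y nn0 nn0) ->
  [/\ @is_inf_path k L (catx l y), r (catx l y nn0 nn0) = r l &
   forall c e, nnle c e -> catx l y (nnadd (d l) c) (nnadd (d l) e) = y c e].
Proof.
move=> Hy Hl.
set f := fun j => comp l (y nn0 (cst j)).
have Hr j : s l = r (y nn0 (cst j)) by rewrite (inf_r Hy (nnle0 (cst j))).
have Hext : forall j, ext (f j) (f j.+1).
  move=> j; have Hjj : nnle (cst j) (cst j.+1) by move=> i; rewrite !ffunE.
  case: Hy => _ Hc _; have [E1 E2] := Hc _ _ _ (nnle0 (cst j)) Hjj.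
  exists (y (cst j) (cst j.+1)); rewrite /f s_comp //; split => //.
  by rewrite E2 compA.
have Hfd : forall j (i : 'I_k), (j <= d (f j) i)%N.
  move=> j i; rewrite /f d_comp // inf_d //; last exact: nnle0.
  by rewrite nnsub0 !ffunE leq_addl.
split.
- exact: lim_inf.
- by rewrite lim_r0 // /f r_comp.
- move=> c e Hce.
  set J := bigJ (nnadd (d l) e).
  have HeJ : nnle e (cst J).
    move=> i; rewrite ffunE; apply: leq_trans (leq_bigmax i); rewrite ffunE; exact: leq_addl.
  have HJ : nnle (nnadd (d l) e) (d (f J)).
    rewrite /f d_comp // (inf_d Hy (nnle0 _)) nnsub0; exact: nnle_add2l.
  rewrite /catx (lim_seg Hext Hfd (nnadd (d l) c) HJ) /f seg_cat //.
    exact: seg_path.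
  by rewrite inf_d ?nnsub0 //; exact: nnle0.
Qed.

Lemma nnaddCA (m n p : NN k) : nnadd m (nnadd n p) = nnadd n (nnadd m p).
Proof. by rewrite !nnaddA (nnaddC m n). Qed.

Lemma zzdiff0 (m n : NN k) : zzdiff m n = zz0 -> m = n.
Proof.
move=> H; apply/ffunP => i; have := congr1 (fun z : ZZ k => z i) H; rewrite /= !ffunE.
by move/eqP; rewrite GRing.subr_eq0 => /eqP [].
Qed.

Lemma not_path_eq y m n : ~ @path_eq k L (@shift k L m y) (@shift k L n y) ->
  exists c e, nnle c e /\ y (nnadd m c) (nnadd m e) <> y (nnadd n c) (nnadd n e).
Proof.
move=> H; apply: NNPP => H2; apply: H => c e Hce; apply: NNPP => H3.
by apply: H2; exists c, e.
Qed.

Section Main.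
Hypothesis HSC : strongly_connected L.
Hypothesis HPer : forall z : ZZ k, in_Per L z <-> z = zz0.

Lemma B1 w m n : m <> n -> exists y, [/\ @is_inf_path k L y, r (y nn0 nn0) = w &
  ~ @path_eq k L (@shift k L m y) (@shift k L n y)].
Proof.
move=> Hmn.
have [x [Hx Hxp]] : exists x, @is_inf_path k L x /\ ~ @path_eq k L (@shift k L m x) (@shift k L n x).
  apply: NNPP => H; apply: Hmn; apply: zzdiff0; apply/HPer.
  exists m, n; split => // x Hx; apply: NNPP => H2; apply: H; by exists x.
have [la [Hr Hs]] := HSC w (r (x nn0 nn0)).
have [Hz Hz0 Hzc] := cat_props Hx Hs.
exists (catx la x); split => //; first by rewrite Hz0.
move=> Hpe; apply: Hxp => a b Hab.
rewrite /shift -!Hzc; try exact: nnle_add2l.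
have := Hpe (nnadd (d la) a) (nnadd (d la) b) (nnle_add2l _ Hab).
by rewrite /shift !(nnaddCA (d la)).
Qed.

Lemma inf_exists w : exists y, @is_inf_path k L y /\ r (y nn0 nn0) = w.
Proof.
case: (classic (exists i : 'I_k, True)) => [[i _]|Hn].
  have Hne : nne i <> (nn0 : NN k).
    by move=> /(congr1 (fun z : NN k => z i)); rewrite !ffunE eqxx.
  by have [y [Hy Hy0 _]] := B1 w Hne; exists y.
exists (fun _ _ => idm w); split; last exact: r_id.
split.
- by move=> m; rewrite r_id.
- by move=> m n p _ _; rewrite r_id s_id; split => //; rewrite -{2}(r_id w) comp_idl.
- move=> m n _; rewrite d_id; apply/ffunP => i; by case: Hn; exists i.
Qed.

Definition stepP (a : M) (j : nat) (b : M) :=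
  [/\ ext a b, (forall i, d a i < d b i)%N &
   forall m n, unpickle j = Some (m, n) -> m <> n ->
     exists c e, [/\ nnle c e, nnle (nnadd m e) (d b), nnle (nnadd n e) (d b) &
       seg b (nnadd m c) (nnadd m e) <> seg b (nnadd n c) (nnadd n e)]].

Lemma ext_path a y Q : @is_inf_path k L y -> r (y nn0 nn0) = s a ->
  [/\ ext a (comp a (y nn0 Q)), d (comp a (y nn0 Q)) = nnadd (d a) Q &
  forall P R, nnle P R -> nnle R Q ->
    seg (comp a (y nn0 Q)) (nnadd (d a) P) (nnadd (d a) R) = y P R].
Proof.
move=> Hy Hya.
have Hs : s a = r (y nn0 Q) by rewrite inf_r //; exact: nnle0.
split.
- by exists (y nn0 Q).
- by rewrite d_comp // inf_d ?nnsub0 //; exact: nnle0.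
- move=> P R HPR HRQ; rewrite seg_cat //; first exact: seg_path.
  by rewrite inf_d ?nnsub0 //; exact: nnle0.
Qed.

Lemma step_ex a j : exists b, stepP a j b.
Proof.
have Hpos : forall Q : NN k, (forall i, 0 < Q i)%N -> forall i, (d a i < (nnadd (d a) Q) i)%N.
  by move=> Q HQ i; rewrite ffunE -[X in (X < _)%N]addn0 ltn_add2l; exact: HQ.
case E: (unpickle j : option (NN k * NN k)) => [[m n]|]; last first.
  have [y [Hy Hy0]] := inf_exists (s a).
  have [H1 H2 _] := ext_path (cst 1) Hy Hy0.
  exists (comp a (y nn0 (cst 1))); split => //.
    by rewrite H2; apply: Hpos => i; rewrite ffunE.
  by move=> ? ?; rewrite E.
case: (classic (m = n)) => [Hmn|Hmn].
  have [y [Hy Hy0]] := inf_exists (s a).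
  have [H1 H2 _] := ext_path (cst 1) Hy Hy0.
  exists (comp a (y nn0 (cst 1))); split => //.
    by rewrite H2; apply: Hpos => i; rewrite ffunE.
  by move=> m' n'; rewrite E => -[<- <-] /(_ Hmn).
have [y [Hy Hy0 Hyp]] := B1 (s a) Hmn.
have [c [e [Hce Hne]]] := not_path_eq Hyp.
set Q := nnadd (nnadd m n) (nnadd e (cst 1)).
have [H1 H2 H3] := ext_path Q Hy Hy0.
exists (comp a (y nn0 Q)); split => //.
  by rewrite H2; apply: Hpos => i; rewrite !ffunE addn1 addnS.
move=> m' n'; rewrite E => -[<- <-] _.
have HmQ : nnle (nnadd m e) Q.
  move=> i; rewrite !ffunE -!addnA leq_add2l; by rewrite addnCA leq_addr.
have HnQ : nnle (nnadd n e) Q.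
  move=> i; rewrite !ffunE (addnC (m i)) -!addnA leq_add2l; by rewrite addnCA leq_addr.
exists (nnadd (d a) c), (nnadd (d a) e); split.
- exact: nnle_add2l.
- by rewrite H2 nnaddCA; exact: nnle_add2l.
- by rewrite H2 nnaddCA; exact: nnle_add2l.
- rewrite !(nnaddCA _ (d a)) !H3 //; exact: nnle_add2l.
Qed.

Definition step j a := epsilon (inhabits a) (stepP a j).
Fixpoint fseq (v : V) (j : nat) : M :=
  if j is j'.+1 then step j' (fseq v j') else idm v.

Lemma fseq_spec v j : stepP (fseq v j) j (fseq v j.+1).
Proof. by rewrite /=; apply: epsilon_spec; apply: step_ex. Qed.

Lemma aper_main : aperiodic L.
Proof.
move=> v; set f := fseq v.
have Hext : forall j, ext (f j) (f j.+1) by move=> j; case: (fseq_spec v j).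
have Hfd : forall j (i : 'I_k), (j <= d (f j) i)%N.
  elim=> [|j IH] i; first by [].
  case: (fseq_spec v j) => _ H _; exact: leq_ltn_trans (IH i) (H i).
exists (limx f); split; first exact: lim_inf.
split; first by rewrite /in_Z lim_r0 // r_id.
move=> m n Hmn Hpe.
have [_ _ H] := fseq_spec v (pickle (m, n)).
have [c [e [Hce Hm Hn Hne]]] := H m n (pickleK _) Hmn.
apply: Hne.
rewrite -(lim_seg Hext Hfd (nnadd m c) Hm) -(lim_seg Hext Hfd (nnadd n c) Hn).
exact: Hpe.
Qed.
End Main.
End Cat.

Theorem proposition5p4 (k : nat) (L : kgraph_data k) :
  is_kgraph L -> kgraph_finite L -> strongly_connected L ->
  (aperiodic L <-> (forall z : ZZ k, in_Per L z <-> z = zz0)).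
Proof.
move=> [Hcat Hdf HUF Hedge] _ HSC; split.
- move=> Hap z; split.
  + move=> [m [n [-> Hper]]]; case: (classic (m = n)) => [<-|Hmn].
      by apply/ffunP => i; rewrite !ffunE GRing.subrr.
    exfalso.
    have [i Hi] : exists i, m i <> n i.
      apply: NNPP => H; apply: Hmn; apply/ffunP => i.
      by apply: NNPP => H2; apply: H; exists i.
    have [la _] := Hedge i.
    have [x [Hx [_ Hne]]] := Hap (kr la).
    exact: (Hne _ _ Hmn (Hper x Hx)).
  + move=> ->; exists nn0, nn0; split.
      by apply/ffunP => i; rewrite !ffunE GRing.subrr.
    by move=> x _ p q _.
- move=> HPer; exact: (aper_main Hcat Hdf HUF HSC HPer).
Qed.
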